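(* Let $(A,B)$ be a weakly non-singular pair in $\mathrm{Sp}(n,1)$ with associated points $p=(p_1,\dots,p_{2n})$. Suppose $\mathbf p=(\mathbf p_1,\dots,\mathbf p_{2n})$ is a lift of $p$ whose Gram matrix $G(\mathbf p)=(\langle\mathbf p_i,\mathbf p_j\rangle)$ is normalized, and let $\mathbf p'=(\mathbf p_1\lambda_1,\dots,\mathbf p_{2n}\lambda_{2n})$, $\lambda_i\in\mathbb H\setminus\{0\}$, be another lift of $p$ whose Gram matrix $G(\mathbf p')$ is also normalized. Then $\lambda_1=\lambda_2=\dots=\lambda_{2n}$ and $\lambda_1\in\mathrm{Sp}(1)$ (i.e. $|\lambda_1|=1$).
   Context: $\mathbb H^{n,1}$: right $\mathbb H$-vector space $\mathbb H^{n+1}$ with Hermitian form $\langle\mathbf z,\mathbf w\rangle=\mathbf w^*H\mathbf z=\bar w_{n+1}z_1+\bar w_2z_2+\dots+\bar w_nz_n+\bar w_1z_{n+1}$ (so $\langle\mathbf z\lambda,\mathbf w\mu\rangle=\bar\mu\langle\mathbf z,\mathbf w\rangle\lambda$); $\mathrm{Sp}(n,1)$ preserves it. A loxodromic $A$ (exactly two fixed points on the boundary $\partial\mathbf H^n_{\mathbb H}$ = projectivized null vectors, no real eigenvalue) has null eigenvectors $\mathbf a_A,\mathbf r_A$ (attracting/repelling fixed points $a_A,r_A$) and positive eigenvectors $\mathbf x_{j,A}$, $1\le j\le n-1$, spanning the eigenspaces of the remaining right-eigenvalue classes (points $x_{j,A}$). A weakly non-singular pair is a pair of regular loxodromics without common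 fixed point satisfying a flag genericity condition which guarantees, after reindexing, that for $1\le k\le n-2$: $\langle\mathbf x_{k,A},\mathbf a_B\rangle,\langle\mathbf x_{k,B},\mathbf a_A\rangle,\langle\mathbf r_A,\mathbf x_{k,B}\rangle,\langle\mathbf r_B,\mathbf x_{k,A}\rangle\ne0$. Associated points: $p_1=a_A,p_2=r_A,p_3=a_B,p_4=r_B$, $p_j=x_{j-4,A}$ ($5\le j\le n+2$), $p_k=x_{k-(n+2),B}$ ($n+3\le k\le 2n$). The Gram matrix $(g_{ij})$, $g_{ij}=\langle\mathbf p_i,\mathbf p_j\rangle$, is normalized if $g_{12}=g_{13}=g_{14}=1$, $|g_{23}|=1$, $g_{1k}=1$ for $n+3\le k\le 2n$, and $g_{3j}=1$ for $5\le j\le n+2$ (equivalently $\langle\mathbf a_A,\mathbf r_A\rangle=\langle\mathbf a_A,\mathbf a_B\rangle=\langle\mathbf a_A,\mathbf r_B\rangle=\langle\mathbf a_A,\mathbf x_{k,B}\rangle=\langle\mathbf a_B,\mathbf x_{k,A}\rangle=1$, $|\langle\mathbf a_B,\mathbf r_A\rangle|=1$). *)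

(* Defs.v *)
From HB Require Import structures.
From mathcomp Require Import all_boot all_order all_algebra.
Set Implicit Arguments.
Unset Strict Implicit.
Unset Printing Implicit Defensive.
Import Order.TTheory GRing.Theory Num.Theory.
Local Open Scope ring_scope.

Section Quaternions.
Variable R : rcfType.

Record quat := Quat { qre : R; qi : R; qj : R; qk : R }.

Definition qzero : quat := Quat 0 0 0 0.
Definition qone : quat := Quat 1 0 0 0.
Definition qadd (p q : quat) : quat :=
  Quat (qre p + qre q) (qi p + qi q) (qj p + qj q) (qk p + qk q).
Definition qmul (p q : quat) : quat :=
  Quat (qre p * qre q - qi p * qi q - qj p * qj q - qk p * qk q)
       (qre p * qi q + qi p * qre q + qj p * qk q - qk p * qj q)
       (qre p * qj q - qi p * qk q + qj p * qre q + qk p * qi q)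
       (qre p * qk q + qi p * qj q - qj p * qi q + qk p * qre q).
Definition qconj (q : quat) : quat := Quat (qre q) (- qi q) (- qj q) (- qk q).
Definition qnorm2 (q : quat) : R :=
  qre q ^+ 2 + qi q ^+ 2 + qj q ^+ 2 + qk q ^+ 2.
Definition qnorm (q : quat) : R := Num.sqrt (qnorm2 q).
Definition qinv (q : quat) : quat :=
  Quat (qre q / qnorm2 q) (- qi q / qnorm2 q) (- qj q / qnorm2 q)
       (- qk q / qnorm2 q).
Definition qreal (q : quat) : Prop := qi q = 0 /\ qj q = 0 /\ qk q = 0.
Definition qpos (q : quat) : Prop := qreal q /\ 0 < qre q.
Definition qsum (m : nat) (F : 'I_m -> quat) : quat :=
  \big[qadd/qzero]_(i < m) F i.
Definition qsimilar (mu nu : quat) : Prop :=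
  exists q, q <> qzero /\ nu = qmul (qmul (qinv q) mu) q.

End Quaternions.

Section Hn1.
Variables (R : rcfType) (n : nat).

(* vectors of the right H-vector space H^{n+1}, coordinates 0..n
   (paper's coordinates 1..n+1) *)
Definition hvec := 'I_n.+1 -> quat R.
Definition hmat := 'I_n.+1 -> 'I_n.+1 -> quat R.

Definition swapidx (i : 'I_n.+1) : 'I_n.+1 :=
  if i == ord0 then ord_max else if i == ord_max then ord0 else i.

(* <z, w> = w^* H z = conj(w_{n+1}) z_1 + conj(w_2) z_2 + ... + conj(w_1) z_{n+1} *)
Definition herm (z w : hvec) : quat R :=
  qsum (fun i => qmul (qconj (w (swapidx i))) (z i)).

Definition vscale (z : hvec) (l : quat R) : hvec := fun i => qmul (z i) l.
Definition mact (M : hmat) (z : hvec) : hvec :=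
  fun i => qsum (fun j => qmul (M i j) (z j)).

Definition vnonzero (z : hvec) : Prop := exists i, z i <> qzero R.
Definition proj_eq (z w : hvec) : Prop := exists q, forall i, w i = qmul (z i) q.

Definition in_Sp (M : hmat) : Prop :=
  forall z w, herm (mact M z) (mact M w) = herm z w.

Definition is_null (z : hvec) : Prop := vnonzero z /\ herm z z = qzero R.
Definition is_pos (z : hvec) : Prop := qpos (herm z z).

Definition eigvec (M : hmat) (z : hvec) (mu : quat R) : Prop :=
  vnonzero z /\ forall i, mact M z i = qmul (z i) mu.

Definition bdry_fixed (M : hmat) (z : hvec) : Prop :=
  is_null z /\ exists mu, eigvec M z mu.

Definition loxodromic (M : hmat) : Prop :=
  in_Sp M /\
  (exists z1 z2, [/\ bdry_fixed M z1, bdry_fixed M z2, ~ proj_eq z1 z2 &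
     forall z, bdry_fixed M z -> proj_eq z1 z \/ proj_eq z2 z]) /\
  (forall z mu, eigvec M z mu -> ~ qreal mu).

Definition class_eigvec (M : hmat) (z : hvec) (mu : quat R) : Prop :=
  exists nu, qsimilar mu nu /\ eigvec M z nu.
Definition spans_eigspace (M : hmat) (z : hvec) (mu : quat R) : Prop :=
  class_eigvec M z mu /\ forall w, class_eigvec M w mu -> proj_eq z w.

(* M is a regular loxodromic with attracting null eigenvector a, repelling
   null eigenvector r, and positive eigenvectors x 0, ..., x (n-2)
   (paper's x_1,...,x_{n-1}) spanning the eigenspaces of the remaining
   eigenvalue classes; regular = the n+1 eigenvalue classes are pairwise
   distinct. *)
Definition reg_lox_data (M : hmat) (a r : hvec) (x : nat -> hvec) : Prop :=
  loxodromic M /\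
  exists (mua mur : quat R) (mux : nat -> quat R),
    let ev := fun i : nat => if i == 0%N then mua else if i == 1%N then mur
                             else mux (i - 2)%N in
    [/\ is_null a /\ eigvec M a mua /\ 1 < qnorm mua,
        is_null r /\ eigvec M r mur /\ qnorm mur < 1,
        (forall j, (j < n - 1)%N -> is_pos (x j) /\ spans_eigspace M (x j) (mux j)),
        (forall i j, (i < n.+1)%N -> (j < n.+1)%N -> i <> j ->
           ~ qsimilar (ev i) (ev j)) &
        (forall z nu, eigvec M z nu -> exists i, (i < n.+1)%N /\ qsimilar (ev i) nu)].

(* p (0-based, p 0 .. p (2n-1)) is a lift of the associated points of the
   weakly non-singular pair (A,B), for an indexing of the positive
   eigenvectors satisfying the non-vanishing conditions. *)
Definition wns_assoc_lift (A B : hmat) (p : nat -> hvec) : Prop :=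
  [/\ exists xl, reg_lox_data A (p 0%N) (p 1%N)
                   (fun j => if (j < n - 2)%N then p (4 + j)%N else xl),
      exists yl, reg_lox_data B (p 2%N) (p 3%N)
                   (fun k => if (k < n - 2)%N then p (n + 2 + k)%N else yl),
      ~ (exists z, bdry_fixed A z /\ bdry_fixed B z) &
      forall k, (k < n - 2)%N ->
        [/\ herm (p (4 + k)%N) (p 2%N) <> qzero R,
            herm (p (n + 2 + k)%N) (p 0%N) <> qzero R,
            herm (p 1%N) (p (n + 2 + k)%N) <> qzero R &
            herm (p 3%N) (p (4 + k)%N) <> qzero R]].

Definition gram (p : nat -> hvec) (i j : nat) : quat R := herm (p i) (p j).

(* normalized Gram matrix, 0-based indices *)
Definition normalized (g : nat -> nat -> quat R) : Prop :=
  [/\ g 0%N 1%N = qone R /\ g 0%N 2%N = qone R /\ g 0%N 3%N = qone R,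
      qnorm (g 1%N 2%N) = 1,
      (forall k, (n + 2 <= k < 2 * n)%N -> g 0%N k = qone R) &
      (forall j, (4 <= j < n + 2)%N -> g 2%N j = qone R)].

End Hn1.

(* Main.v *)
Require Import Defs.
From mathcomp Require Import all_boot all_order all_algebra.
From mathcomp Require Import ring lra zify.
Import Order.TTheory GRing.Theory Num.Theory.
Local Open Scope ring_scope.

Section Aux.
Context {R : rcfType}.

Lemma qeq (a b : quat R) : qre a = qre b -> qi a = qi b -> qj a = qj b ->
  qk a = qk b -> a = b.
Proof. by case: a => ????; case: b => ???? /= -> -> -> ->. Qed.

Lemma qnorm2_mul (x y : quat R) : qnorm2 (qmul x y) = qnorm2 x * qnorm2 y.
Proof. case: x => ????; case: y => ????; rewrite /qnorm2 /qmul /=; ring. Qed.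

Lemma qnorm2_conj (x : quat R) : qnorm2 (qconj x) = qnorm2 x.
Proof. case: x => ????; rewrite /qnorm2 /qconj /=; ring. Qed.

Lemma qnorm2_ge0 (x : quat R) : 0 <= qnorm2 x.
Proof. case: x => a b c d; rewrite /qnorm2 /=; nra. Qed.

Lemma qnorm2_one : qnorm2 (qone R) = 1.
Proof. rewrite /qnorm2 /=; ring. Qed.

Lemma qnorm_1 (x : quat R) : qnorm x = 1 -> qnorm2 x = 1.
Proof. by move=> H; rewrite -(sqr_sqrtr (qnorm2_ge0 x)) -/(qnorm x) H expr1n. Qed.

Lemma qmul_one_r (x : quat R) : qmul x (qone R) = x.
Proof. apply: qeq; rewrite /qmul /=; ring. Qed.

Lemma eqR {x y u v : R} : x = y -> u - v = x - y -> u = v.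
Proof. by move=> -> /eqP; rewrite subrr subr_eq0 => /eqP. Qed.
Lemma eqR_old (x y u v : R) : x = y -> u - v = x - y -> u = v.
Proof. by move=> -> /eqP; rewrite subrr subr_eq0 => /eqP. Qed.

Definition qdivn (b : quat R) : quat R :=
  Quat (qre b / qnorm2 b) (qi b / qnorm2 b) (qj b / qnorm2 b) (qk b / qnorm2 b).

Lemma inv_lemma (a b : quat R) : qmul (qconj a) b = qone R ->
  a = qdivn b /\ qnorm2 a * qnorm2 b = 1.
Proof.
move=> H.
have N : qnorm2 a * qnorm2 b = 1.
  by rewrite -qnorm2_conj -qnorm2_mul H qnorm2_one.
have Nb : qnorm2 b != 0.
  by apply/eqP => E; move: N; rewrite E mulr0 => /eqP; rewrite eq_sym oner_eq0.
split => //.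
have H2 := congr1 (fun q => qmul q (qconj b)) H; move: H2 => /=.
move: Nb; case: a {H N} => a1 a2 a3 a4; case: b => b1 b2 b3 b4.
rewrite /qmul /qconj /qdivn /qnorm2 /= => Nb [E1 E2 E3 E4].
apply: qeq => /=; apply: (mulIf Nb); rewrite divfK //.
- by apply: (eqR E1); ring.
- by apply: oppr_inj; apply: (eqR E2); ring.
- by apply: oppr_inj; apply: (eqR E3); ring.
- by apply: oppr_inj; apply: (eqR E4); ring.
Qed.

Lemma qdivn1 (b : quat R) : qnorm2 b = 1 -> qdivn b = b.
Proof. by move=> E; apply: qeq; rewrite /= E divr1. Qed.

Lemma qnorm2_qdivn (b : quat R) : qnorm2 b = 1 -> qnorm2 (qdivn b) = 1.
Proof. by move=> E; rewrite qdivn1. Qed.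

End Aux.
Arguments inv_lemma {R a b}.

Lemma herm_scale (R : rcfType) (n : nat) (z w : hvec R n) (l m : quat R) :
  herm (vscale z l) (vscale w m) = qmul (qmul (qconj m) (herm z w)) l.
Proof.
rewrite /herm /qsum.
rewrite (@big_morph _ _ (fun x => qmul (qmul (qconj m) x) l) (qzero R) (@qadd R) (qzero R) (@qadd R)).
- apply: eq_bigr => i _; rewrite /vscale.
  case: (w _) => ????; case: (z _) => ????; case: m => ????; case: l => ????.
  apply: qeq; rewrite /qmul /qconj /=; ring.
- move=> x y; case: x => ????; case: y => ????; case: m => ????; case: l => ????.
  apply: qeq; rewrite /qmul /qconj /qadd /=; ring.
- case: m => ????; case: l => ????; apply: qeq; rewrite /qmul /qconj /=; ring.
Qed.

Theorem mainTheorem7 (R : rcfType) (n : nat) (A B : hmat R n)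
    (p : nat -> hvec R n) (lam : nat -> quat R) :
  (2 <= n)%N ->
  wns_assoc_lift A B p ->
  normalized n (gram p) ->
  (forall i, (i < 2 * n)%N -> lam i <> qzero R) ->
  normalized n (gram (fun i => vscale (p i) (lam i))) ->
  (forall i, (i < 2 * n)%N -> lam i = lam 0%N) /\ qnorm (lam 0%N) = 1.
Proof.
move=> n2 _ [[g01 [g02 g03]] g12 g0k g2j] _ [[h01 [h02 h03]] h12 h0k h2j].
move: h01 h02 h03 h12 h0k h2j; rewrite /gram !herm_scale.
rewrite -!/(gram p _ _) g01 g02 g03 !qmul_one_r => h01 h02 h03 h12 h0k h2j.
have [e1 n1] := inv_lemma h01.
have [e2 n2'] := inv_lemma h02.
have [e3 n3] := inv_lemma h03.
move/qnorm_1: h12; rewrite !qnorm2_mul qnorm2_conj.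
move/qnorm_1: g12; rewrite /gram => ->; rewrite mulr1 => n12.
have N1 : qnorm2 (lam 1%N) = 1.
  have := qnorm2_ge0 (lam 1%N); have := qnorm2_ge0 (lam 2%N);
  have := qnorm2_ge0 (lam 0%N); nra.
have N0 : qnorm2 (lam 0%N) = 1 by rewrite -n1 N1 mul1r.
have N2 : qnorm2 (lam 2%N) = 1 by move: n2'; rewrite N0 mulr1.
rewrite qdivn1 // in e1 e2 e3.
split; last by rewrite /qnorm N0 sqrtr1.
move=> i Hi.
case: (ltnP i 4) => Hi4.
  move: Hi4; case: i Hi => [|[|[|[|i]]]] //= _ _; by [rewrite e1|rewrite e2|rewrite e3].
case: (ltnP i (n + 2)) => Hin.
  have := h2j i; rewrite /gram herm_scale.
  rewrite -/(gram p _ _) g2j; last by apply/andP.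
  rewrite qmul_one_r => /(_ (introT andP (conj Hi4 Hin))) /inv_lemma [-> _].
  by rewrite e2 qdivn1.
have := h0k i; rewrite /gram herm_scale.
rewrite -/(gram p _ _) g0k; last by apply/andP.
rewrite qmul_one_r => /(_ (introT andP (conj Hin Hi))) /inv_lemma [-> _].
by rewrite qdivn1.
Qed.
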